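(* Let $X=[X_1|X_2]$ be a real $n\times p$ matrix with $X_1$ of size $n\times p_1$ and $X_2$ of size $n\times p_2$, where $X_1$ has linearly independent columns ($\mathrm{rank}(X_1)=p_1\le n$). Let $X_2=[X_{2,1}|\cdots|X_{2,B}]$ be split into blocks, let $\lambda_1,\dots,\lambda_B>0$ and let $\Lambda$ be the $p_2\times p_2$ diagonal matrix whose diagonal entries corresponding to the columns of $X_{2,b}$ equal $\lambda_b$. Let $\Lambda'=\begin{pmatrix}\mathbf{0}_{p_1\times p_1}&\mathbf{0}_{p_1\times p_2}\\ \mathbf{0}_{p_2\times p_1}&\Lambda\end{pmatrix}$. Let $W$ be an $n\times n$ diagonal matrix with strictly positive diagonal entries, set $X_{k,W}=W^{1/2}X_k$ for $k=1,2$, $P_{1,W}=I_{n\times n}-X_{1,W}(X_{1,W}^TX_{1,W})^{-1}X_{1,W}^T$, $\Sigma_{2,b}=X_{2,b}X_{2,b}^T$, and $$\Gamma_{W,\Lambda}=W^{1/2}\Bigl(\sum_{b=1}^B\lambda_b^{-1}\Sigma_{2,b}\Bigr)W^{1/2}.$$ Let $H_{W,\Lambda}=X(X^TWX+\Lambda')^{-1}X^T$. Then $$H_{W,\Lambda}=W^{-1/2}X_{1,W}(X_{1,W}^TX_{1,W})^{-1}X_{1,W}^T\bigl(I_{n\times n}-W^{1/2}H_{2,W,\Lambda}W^{1/2}\bigr)W^{-1/2}+H_{2,W,\Lambda},$$ where $$H_{2,W,\Lambda}=W^{-1/2}\,\Gamma_{W,\Lambda}\Bigl(I_{n\times n}-(I_{n\times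 n}+P_{1,W}\Gamma_{W,\Lambda})^{-1}P_{1,W}\Gamma_{W,\Lambda}\Bigr)P_{1,W}\,W^{-1/2}.$$
   Context: $X_1$ contains unpenalized covariates and $X_2$ contains penalized covariates in multi-penalty ridge regression; $H_{W,\Lambda}$ is the sample-weighted hat matrix used in iterative weighted least squares. *)

(* Defs.v *)
From HB Require Import structures.
From mathcomp Require Import all_boot all_order all_algebra.
From mathcomp Require Import reals.
Set Implicit Arguments. Unset Strict Implicit. Unset Printing Implicit Defensive.
Import Order.TTheory GRing.Theory Num.Theory.
Local Open Scope ring_scope.

Definition sqrt_diag (R : realType) (n : nat) (w : 'I_n -> R) : 'M[R]_n :=
  diag_mx (\row_i Num.sqrt (w i)).
Definition invsqrt_diag (R : realType) (n : nat) (w : 'I_n -> R) : 'M[R]_n :=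
  diag_mx (\row_i (Num.sqrt (w i))^-1).

(* Main.v *)
Require Import Defs.
From HB Require Import structures.
From mathcomp Require Import all_boot all_order all_algebra.
From mathcomp Require Import reals.
Import Order.TTheory GRing.Theory Num.Theory.
Local Open Scope ring_scope.

Set Implicit Arguments. Unset Strict Implicit. Unset Printing Implicit Defensive.

Section Gram.
Variable R : realType.
Lemma mul_self_ge0 (x : R) : 0 <= x * x. Proof. by rewrite -expr2 sqr_ge0. Qed.

Lemma sumsq_ge0 k (u : 'rV[R]_k) : 0 <= (u *m u^T) 0 0.
Proof.
rewrite mxE; apply: sumr_ge0 => j _; rewrite mxE; exact: mul_self_ge0.
Qed.

Lemma sumsq_eq0 k (u : 'rV[R]_k) : (u *m u^T) 0 0 = 0 -> u = 0.
Proof.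
rewrite mxE => H.
have H' : \sum_(j < k) u 0 j * u 0 j = 0.
  by rewrite -[RHS]H; apply: eq_bigr => l _; rewrite mxE.
have H2 := psumr_eq0P (P := predT) (fun j _ => mul_self_ge0 (u 0 j)) H'.
apply/matrixP => i j; rewrite (ord1 i) !mxE.
have E := H2 j isT. by apply/eqP; move: E => /eqP; rewrite mulf_eq0 orbb.
Qed.

Lemma gram_unit k m (K : 'M[R]_(k, m)) (L : 'M[R]_m) :
  (forall v : 'rV_m, 0 <= (v *m L *m v^T) 0 0) ->
  (forall v : 'rV_m, (v *m L *m v^T) 0 0 = 0 -> v *m K^T = 0 -> v = 0) ->
  K^T *m K + L \in unitmx.
Proof.
move=> Lge0 HL; rewrite -row_free_unit -kermx_eq0.
apply/eqP/row_matrixP => i; rewrite row0.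
set v := row i _.
have Hv : v *m (K^T *m K + L) = 0 by rewrite /v -row_mul mulmx_ker row0.
have E : (v *m K^T *m (v *m K^T)^T) 0 0 + (v *m L *m v^T) 0 0 = 0.
  have E0 : (v *m (K^T *m K + L) *m v^T) 0 0 = 0 by rewrite Hv mul0mx mxE.
  rewrite -[RHS]E0.
  by rewrite trmx_mul trmxK mulmxDr mulmxDl !mulmxA [in RHS]mxE.
move/eqP: E; rewrite paddr_eq0 ?sumsq_ge0 // => /andP[/eqP E1 /eqP E2].
exact: HL E2 (sumsq_eq0 E1).
Qed.
End Gram.


Section Core.
Variable R : realType.
Variables (n p1 q : nat) (A : 'M[R]_(n, p1)) (C : 'M[R]_(n, q)) (L Li : 'M[R]_q).
Hypothesis HG : A^T *m A \in unitmx.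
Lemma zmod_aux (V : zmodType) (a b c d e : V) :
  c - b + d = e - a -> a - b + (c + d) = e.
Proof.
move=> H; rewrite -[e](subrK a) -H [RHS]addrC !addrA.
by rewrite (addrAC a (-b) c).
Qed.

Let Gi := invmx (A^T *m A).
Let Q := A *m Gi *m A^T.
Let P : 'M[R]_n := 1%:M - Q.

Lemma QA : Q *m A = A.
Proof. by rewrite /Q -!mulmxA mulVmx // mulmx1. Qed.
Lemma QQ : Q *m Q = Q.
Proof. by rewrite {2}/Q !mulmxA QA. Qed.
Lemma AtQ : A^T *m Q = A^T.
Proof. by rewrite /Q !mulmxA mulmxV // mul1mx. Qed.
Lemma QT : Q^T = Q.
Proof. by rewrite /Q /Gi !trmx_mul trmxK trmx_inv trmx_mul trmxK mulmxA. Qed.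
Lemma PT : P^T = P.
Proof. by rewrite /P linearB /= trmx1 QT. Qed.
Lemma PP : P *m P = P.
Proof. by rewrite /P mulmxBr mulmx1 mulmxBl mul1mx QQ subrr subr0. Qed.

Let S := C^T *m P *m C + L.
Hypothesis HS : S \in unitmx.
Let X := row_mx A C.
Let M := X^T *m X + block_mx 0 0 0 L.
Hypothesis HM : M \in unitmx.
Hypothesis hyp1 : C *m Li *m L = C.
Hypothesis hyp2 : L *m Li *m C^T = C^T.
Let G := C *m Li *m C^T.
Let iS := invmx S.
Let Z2 := iS *m C^T *m P.
Let Z1 := Gi *m A^T *m (1%:M - C *m Z2).

Lemma MZ : M *m col_mx Z1 Z2 = X^T.
Proof.
rewrite /M /X tr_row_mx mul_col_row add_block_mx !addr0 mul_block_col.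
congr col_mx.
  by rewrite /Z1 !mulmxA mulmxV // mul1mx mulmxBr mulmx1 !mulmxA subrK.
have SZ : S *m Z2 = C^T *m P by rewrite /Z2 /iS !mulmxA mulmxV // mul1mx.
move: SZ; rewrite /S /P mulmxDl mulmxBr mulmx1 !mulmxBl !mulmxA => SZ.

rewrite mulmxBr mulmx1 !mulmxA mulmxDl.
rewrite !mulmxDl; exact: zmod_aux.
Qed.

Lemma XZ : X *m invmx M *m X^T = Q + P *m C *m iS *m C^T *m P.
Proof.
rewrite -mulmxA -MZ mulKmx // /X mul_row_col /Z1 !mulmxA -/Q.
rewrite mulmxBr mulmx1 /P mulmxBl mul1mx /Z2 !mulmxA.
by rewrite !mulmxBl addrAC -addrA.
Qed.

Let U : 'M[R]_n := 1%:M + P *m G.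

Lemma F1 : C *m iS *m C^T + G *m P *m C *m iS *m C^T = G.
Proof.
have E : C *m Li *m S *m iS *m C^T = G.
  by rewrite -(mulmxA _ S) mulmxV // mulmx1.
by rewrite -{2}E /S mulmxDr !mulmxA hyp1 !mulmxDl /G [RHS]addrC.
Qed.

Lemma zmod_aux2 (V : zmodType) (b c : V) : c - (c - b) = b.
Proof. by rewrite opprB addrC subrK. Qed.
Lemma zmod_aux3 (V : zmodType) (a b : V) : (a + b) - a = b.
Proof. by rewrite addrC addKr. Qed.

Lemma PGK : P *m G *m (P *m C *m iS *m C^T) = P *m G - P *m C *m iS *m C^T.
Proof.
by rewrite -[in RHS]F1 mulmxDr !mulmxA zmod_aux3.
Qed.

Lemma UV : U *m (1%:M - P *m C *m iS *m C^T) = 1%:M.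
Proof.
rewrite /U mulmxDl mul1mx mulmxBr mulmx1 PGK zmod_aux2 subrK //.
Qed.

Lemma Uunit : U \in unitmx.
Proof. by case: (mulmx1_unit UV). Qed.

Lemma hyp2' k (Y : 'M[R]_(k, q)) : Y *m L *m Li *m C^T = Y *m C^T.
Proof. by rewrite -!mulmxA (mulmxA L) hyp2. Qed.

Lemma F2 : C *m iS *m C^T *m U = G.
Proof.
have E : C *m iS *m S *m Li *m C^T = G by rewrite mulmxKV.
by rewrite -E /S mulmxDr !mulmxDl hyp2' addrC /U mulmxDr mulmx1 /G !mulmxA.
Qed.

Lemma CiSC : C *m iS *m C^T = G *m invmx U.
Proof. by rewrite -F2 mulmxK // Uunit. Qed.

Lemma invU_eq : 1%:M - invmx U *m P *m G = invmx U.
Proof.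
have E := mulVmx Uunit; rewrite {2}/U mulmxDr mulmx1 mulmxA in E.
by rewrite -E addrK.
Qed.

Lemma core : X *m invmx M *m X^T =
  Q *m (1%:M - G *m (1%:M - invmx U *m P *m G) *m P) +
  G *m (1%:M - invmx U *m P *m G) *m P.
Proof.
rewrite XZ invU_eq -CiSC.
have -> : P *m C *m iS *m C^T *m P = C *m iS *m C^T *m P - Q *m (C *m iS *m C^T *m P).
  by rewrite /P -(mulmxA _ C) -(mulmxA _ (C *m iS)) -(mulmxA _ (C *m iS *m C^T)) mulmxBl mul1mx.
by rewrite [in RHS]mulmxBr [in RHS]mulmx1 addrA addrAC.
Qed.
End Core.


Section LamS.
Variable R : realType.
Variables (B : nat) (pb : 'I_B -> nat) (lam : 'I_B -> R).
Hypothesis Hlam : forall b, 0 < lam b.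
Let Lam : 'M[R]_(\sum_(b < B) pb b) := \mxdiag_(b < B) ((lam b)%:M : 'M[R]_(pb b)).

Lemma Lam_quad (v : 'rV[R]_(\sum_(b < B) pb b)) :
  (v *m Lam *m v^T) 0 0 = \sum_b lam b * (submxrow v b *m (submxrow v b)^T) 0 0.
Proof.
rewrite -{1 2}(submxrowK v) /Lam mul_mxrow_mxdiag tr_mxrow mul_mxrow_mxcol summxE.
by apply: eq_bigr => b _; rewrite mul_mx_scalar -scalemxAl mxE.
Qed.

Lemma Lam_ge0 (v : 'rV[R]_(\sum_(b < B) pb b)) : 0 <= (v *m Lam *m v^T) 0 0.
Proof.
rewrite Lam_quad; apply: sumr_ge0 => b _; apply: mulr_ge0; last exact: sumsq_ge0.
exact: ltW.
Qed.

Lemma Lam_eq0 (v : 'rV[R]_(\sum_(b < B) pb b)) : (v *m Lam *m v^T) 0 0 = 0 -> v = 0.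
Proof.
rewrite Lam_quad => H.
have H2 := psumr_eq0P (P := predT) (fun b _ => mulr_ge0 (ltW (Hlam b)) (sumsq_ge0 (submxrow v b))) H.
rewrite -(submxrowK v) -(mxrow0 (V:=R)). apply: eq_mxrow => b.
apply: sumsq_eq0.
have := H2 b isT; move/eqP; rewrite mulf_eq0 (gt_eqF (Hlam b)) /= => /eqP E; exact: E.
Qed.
End LamS.

Unset Implicit Arguments. Set Strict Implicit. Set Printing Implicit Defensive.

Theorem proposition1 (R : realType) (n p1 B : nat) (pb : 'I_B -> nat)
  (X1 : 'M[R]_(n, p1)) (X2b : forall b : 'I_B, 'M[R]_(n, pb b))
  (lam : 'I_B -> R) (w : 'I_n -> R) :
  \rank X1 = p1 ->
  (forall b, 0 < lam b) ->
  (forall i, 0 < w i) ->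
  let X2 : 'M[R]_(n, \sum_(b < B) pb b) := \mxrow_(b < B) X2b b in
  let X : 'M[R]_(n, p1 + \sum_(b < B) pb b) := row_mx X1 X2 in
  let Lam : 'M[R]_(\sum_(b < B) pb b) := \mxdiag_(b < B) ((lam b)%:M : 'M[R]_(pb b)) in
  let Lam' : 'M[R]_(p1 + \sum_(b < B) pb b) := block_mx 0 0 0 Lam in
  let W : 'M[R]_n := diag_mx (\row_i w i) in
  let Wh := sqrt_diag w in
  let Wmh := invsqrt_diag w in
  let X1W := Wh *m X1 in
  let P1W : 'M[R]_n := 1%:M - X1W *m invmx (X1W^T *m X1W) *m X1W^T in
  let Gam : 'M[R]_n :=
    Wh *m (\sum_(b < B) (lam b)^-1 *: (X2b b *m (X2b b)^T)) *m Wh in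
  let HW : 'M[R]_n := X *m invmx (X^T *m W *m X + Lam') *m X^T in
  let H2 : 'M[R]_n :=
    Wmh *m Gam *m (1%:M - invmx (1%:M + P1W *m Gam) *m P1W *m Gam)
        *m P1W *m Wmh in
  HW = Wmh *m X1W *m invmx (X1W^T *m X1W) *m X1W^T
         *m (1%:M - Wh *m H2 *m Wh) *m Wmh + H2.
Proof.
move=> HX1 Hlam Hw X2 X Lam Lam' W Wh Wmh X1W P1W Gam HW H2.
have sq_gt0 i : 0 < Num.sqrt (w i) by rewrite sqrtr_gt0.
have DmD : Wmh *m Wh = 1%:M.
  rewrite /Wmh /Wh /sqrt_diag /invsqrt_diag mulmx_diag -diag_const_mx; congr diag_mx.
  by apply/matrixP => i j; rewrite !mxE mulVf // gt_eqF.
have DDm : Wh *m Wmh = 1%:M.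
  rewrite /Wmh /Wh /sqrt_diag /invsqrt_diag mulmx_diag -diag_const_mx; congr diag_mx.
  by apply/matrixP => i j; rewrite !mxE mulfV // gt_eqF.
have DT : Wh^T = Wh by rewrite /Wh /sqrt_diag tr_diag_mx.
have DmT : Wmh^T = Wmh by rewrite /Wmh /invsqrt_diag tr_diag_mx.
have DD : Wh *m Wh = W.
  rewrite /W /Wh /sqrt_diag mulmx_diag; congr diag_mx.
  by apply/matrixP => i j; rewrite !mxE -expr2 sqr_sqrtr // ltW.
have Dunit : Wh \in unitmx by case: (mulmx1_unit DDm).
set C := Wh *m X2.
set Li : 'M[R]_(\sum_(b < B) pb b) := \mxdiag_(b < B) (((lam b)^-1)%:M : 'M[R]_(pb b)).
have CE : C = \mxrow_b (Wh *m X2b b) by rewrite /C /X2 mul_mxrow.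
have hyp1 : C *m Li *m Lam = C.
  rewrite CE /Li /Lam !mul_mxrow_mxdiag; apply: eq_mxrow => b.
  by rewrite -mulmxA -scalar_mxM mulVf ?gt_eqF // mulmx1.
have hyp2 : Lam *m Li *m C^T = C^T.
  rewrite CE tr_mxrow /Li /Lam -mulmxA !mul_mxdiag_mxcol; apply: eq_mxcol => b.
  by rewrite mulmxA -scalar_mxM mulfV ?gt_eqF // mul1mx.
have GamE : Gam = C *m Li *m C^T.
  rewrite CE /Li tr_mxrow mul_mxrow_mxdiag mul_mxrow_mxcol /Gam mulmx_sumr mulmx_suml.
  apply: eq_bigr => b _.
  by rewrite mul_mx_scalar trmx_mul DT -scalemxAl -!scalemxAr -scalemxAl !mulmxA.
have rfA : row_free X1W^T.
  rewrite /row_free /X1W trmx_mul mxrankMfree ?mxrank_tr ?HX1 //.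
  by rewrite row_free_unit DT.
have HG : X1W^T *m X1W \in unitmx.
  have := @gram_unit R _ _ X1W 0; rewrite addr0; apply.
    by move=> v; rewrite mulmx0 mul0mx mxE.
  by move=> v _ /eqP; rewrite mulmx_free_eq0 // => /eqP.
have HS : C^T *m P1W *m C + Lam \in unitmx.
  have := @gram_unit R _ _ (P1W *m C) Lam (Lam_ge0 Hlam) (fun v h _ => Lam_eq0 Hlam h).
  by rewrite trmx_mul /P1W PT mulmxA -(mulmxA _ _ (1%:M - _)) PP.
have Lq : forall v : 'rV_(p1 + \sum_(b < B) pb b),
    (v *m Lam' *m v^T) 0 0 = (rsubmx v *m Lam *m (rsubmx v)^T) 0 0.
  move=> v; rewrite -{1 2}(hsubmxK v) /Lam' mul_row_block !mulmx0 !addr0 add0r.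
  by rewrite tr_row_mx mul_row_col mul0mx add0r.
set XW := row_mx X1W C.
have HM : XW^T *m XW + Lam' \in unitmx.
  apply: gram_unit.
    by move=> v; rewrite Lq; apply: Lam_ge0.
  move=> v; rewrite Lq => /(Lam_eq0 Hlam) R0.
  rewrite -(hsubmxK v) R0 /XW tr_row_mx mul_row_col mul0mx addr0 => /eqP.
  by rewrite mulmx_free_eq0 // => /eqP ->; rewrite row_mx0.
set K2 := Gam *m (1%:M - invmx (1%:M + P1W *m Gam) *m P1W *m Gam) *m P1W.
have K' : XW *m invmx (XW^T *m XW + Lam') *m XW^T =
    X1W *m invmx (X1W^T *m X1W) *m X1W^T *m (1%:M - K2) + K2.
  rewrite /K2 GamE; exact: core HG HS HM hyp1 hyp2.
have XE : X = Wmh *m XW by rewrite /X /XW /X1W /C -mul_mx_row mulmxA DmD mul1mx.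
have XtWX : X^T *m W *m X = XW^T *m XW.
  rewrite XE trmx_mul DmT -DD !mulmxA -(mulmxA _ Wmh Wh) DmD mulmx1.
  by rewrite -(mulmxA _ Wh Wmh) DDm mulmx1.
have HWE : HW = Wmh *m (XW *m invmx (XW^T *m XW + Lam') *m XW^T) *m Wmh.
  by rewrite /HW XtWX XE trmx_mul DmT !mulmxA.
have H2E : H2 = Wmh *m K2 *m Wmh by rewrite /H2 /K2 !mulmxA.
have H2E' : Wh *m H2 *m Wh = K2.
  by rewrite H2E (mulmxA Wh (Wmh *m K2)) (mulmxA Wh Wmh) DDm mul1mx -(mulmxA K2) DmD mulmx1.
rewrite HWE H2E' K' H2E mulmxDr mulmxDl !mulmxA.
done.
Qed.
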